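(* Let $H_2$ be the graph with vertex set $\{0,1,2,3,4,5,u_1,u_2\}$ and edge set $\{01,03,04,05,12,13,14,15,23,24,25,34,45,\ 3u_1,4u_1,5u_1,\ 3u_2,4u_2,5u_2\}$, and for $r\ge 2$ let $H_r$ be obtained from $H_2$ by adding vertices $u_3,\dots,u_r$, each adjacent exactly to $3,4,5$ (so $N(u_k)=N(u_1)=\{3,4,5\}$ for all $k$). Then for $r\ge 2$, $\operatorname{Z}(H_r)=r+2$, $\underline{z_0}(H_r)=r+3$, and $z_0(H_r)=r+5$.
   Context: Zero forcing on a graph $G$: starting with a set $S$ of blue vertices (others white), a blue vertex $v$ may change a white vertex $w$ to blue if $w$ is the only white neighbor of $v$. $S$ is a zero forcing set if repeated application colors all of $V(G)$ blue. $\operatorname{Z}(G)$ is the minimum size of a zero forcing set. $\mathscr{Z}^{\rm TAR}(G)$ has vertices the zero forcing sets of $G$, two adjacent iff their symmetric difference has size 1; $\mathscr{Z}^{\rm TAR}_k(G)$ is its subgraph induced by zero forcing sets of size at most $k$. $\underline{z_0}(G)$ is the least $k$ with $\mathscr{Z}^{\rm TAR}_k(G)$ connected; $z_0(G)$ is the least $k$ such that $\mathscr{Z}^{\rm TAR}_i(G)$ is connected for every $i=k,\dots,|V(G)|$. *)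

(* Defs.v *)
From mathcomp Require Import all_boot.
Set Implicit Arguments. Unset Strict Implicit. Unset Printing Implicit Defensive.

Section ZeroForcing.
Variables (T : finType) (adj : rel T).

Definition force_step (B : {set T}) : {set T} :=
  B :|: [set w | [exists v, [&& v \in B, adj v w, w \notin B &
                   [forall x, (adj v x && (x \notin B)) ==> (x == w)]]]].

Definition zfs (S : {set T}) : bool :=
  [exists n : 'I_#|T|.+1, iter n force_step S == [set: T]].

Definition Zf : nat := \big[minn/#|T|]_(S : {set T} | zfs S) #|S|.

Definition tar_adj (k : nat) : rel {set T} := fun S1 S2 =>
  [&& zfs S1, zfs S2, #|S1| <= k, #|S2| <= k &
      #|(S1 :\: S2) :|: (S2 :\: S1)| == 1].

(* Z^TAR_k(G) is connected (a connected graph is nonempty). *)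
Definition tar_connected (k : nat) : Prop :=
  (exists S : {set T}, zfs S && (#|S| <= k)) /\
  forall S1 S2 : {set T}, zfs S1 -> zfs S2 -> #|S1| <= k -> #|S2| <= k ->
    connect (tar_adj k) S1 S2.

Definition lz0 (k : nat) : Prop :=
  tar_connected k /\ forall j, j < k -> ~ tar_connected j.

Definition z0_good (k : nat) : Prop :=
  forall i, k <= i <= #|T| -> tar_connected i.
Definition is_z0 (k : nat) : Prop :=
  z0_good k /\ forall j, j < k -> ~ z0_good j.

End ZeroForcing.

(* The graph H_r: vertices inl i (i = 0..5) and inr k (= u_{k+1}, k < r). *)
Definition H_core_edges : seq (nat * nat) :=
  [:: (0,1); (0,3); (0,4); (0,5); (1,2); (1,3); (1,4); (1,5);
      (2,3); (2,4); (2,5); (3,4); (4,5)].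

Definition Hadj (r : nat) : rel ('I_6 + 'I_r)%type := fun x y =>
  match x, y with
  | inl i, inl j => ((nat_of_ord i, nat_of_ord j) \in H_core_edges)
                    || ((nat_of_ord j, nat_of_ord i) \in H_core_edges)
  | inl i, inr _ => (3 <= i)
  | inr _, inl j => (3 <= j)
  | inr _, inr _ => false
  end.

(* Main.v *)
Require Import Defs.
From mathcomp Require Import all_boot zify.
Set Implicit Arguments. Unset Strict Implicit. Unset Printing Implicit Defensive.

Definition cadjn (i j : nat) : bool :=
  ((i, j) \in H_core_edges) || ((j, i) \in H_core_edges).
Definition I6 := iota 0 6.
Arguments I6 : simpl never.
Definition mb (l : seq bool) (i : nat) := nth false l i.
Definition okf (b : bool) (l : seq bool) (i w : nat) :=
  [&& mb l i, cadjn i w, ~~ mb l w,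
      all (fun x => (cadjn i x && ~~ mb l x) ==> (x == w)) I6 & ~~ b || (i < 3)].
Definition uf (l : seq bool) (w : nat) :=
  [&& 3 <= w, ~~ mb l w & all (fun x => ((3 <= x) && ~~ mb l x) ==> (x == w)) I6].
Definition fb (b : bool) (l : seq bool) : seq bool :=
  [seq mb l w || has (fun i => okf b l i w) I6 || uf l w | w <- I6].
Definition g1 (l : seq bool) : bool :=
  has (fun i => [&& mb l i, 3 <= i & all (fun x => ~~ (cadjn i x && ~~ mb l x)) I6]) I6.
Definition AS := (seq bool * bool)%type.
Definition astep (s : AS) : AS := (fb s.2 s.1, s.2 && ~~ g1 s.1).
Definition afull (s : AS) := all (mb s.1) I6 && ~~ s.2.
Definition azfs (s : AS) := afull (iter 7 astep s).


Fixpoint allb (n : nat) : seq (seq bool) :=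
  if n is n'.+1 then [seq b :: l | b <- [:: false; true], l <- allb n'] else [:: [::]].
Definition nodes : seq AS := [seq (l, b) | l <- allb 6, b <- [:: false; true]].
Definition cnt (l : seq bool) := count (mb l) I6.
Definition dif (l l' : seq bool) := count (fun i => mb l i != mb l' i) I6.
Definition valid (d : nat) (s : AS) := azfs s && (cnt s.1 + ~~ s.2 <= d.+1).
Definition aadj (s s' : AS) : bool :=
  ((s.2 == s'.2) && (dif s.1 s'.1 == 1)) || ((dif s.1 s'.1 == 0) && (s.2 != s'.2)).
Definition hub : AS := ([:: true; false; false; true; true; false], false).
Definition s3 : AS := ([:: true; false; false; true; true; false], true).
Definition l4 : seq bool := [:: true; true; true; true; false; false].
Definition Vd d := [seq s <- nodes | valid d s].
Definition stepR (V R : seq AS) := R ++ [seq y <- V | has (fun x => aadj x y) R].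
Definition reach d n := iter n (stepR (Vd d)) [:: hub].

Lemma C1 : all (fun s => astep (iter 7 astep s) == iter 7 astep s) nodes.
Proof. vm_compute. reflexivity. Qed.
Lemma C2 : all (fun s => afull s ==> afull (astep s)) nodes.
Proof. vm_compute. reflexivity. Qed.
Lemma C3 : all (fun s => azfs s ==> (3 <= cnt s.1)) nodes.
Proof. vm_compute. reflexivity. Qed.
Lemma C4 : [&& azfs s3, azfs hub & azfs (l4, false)].
Proof. vm_compute. reflexivity. Qed.
Definition check_gen (V R : seq AS) : bool := (hub \in V) && all (fun s => s \in R) V.
Definition check_gen2 (V : seq AS) : bool := check_gen V (iter 12 (stepR V) [:: hub]).
Definition check (d : nat) : bool := check_gen2 (Vd d).
Lemma C5 : [&& check 3, check 5 & check 6].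
Proof. vm_compute. reflexivity. Qed.
Lemma nodes_size : all (fun s => size s.1 == 6) nodes.
Proof. vm_compute. reflexivity. Qed.
Lemma C6 : all (fun s => azfs s ==> (cnt s.1 + ~~ s.2 <= 5) ==> (dif l4 s.1 + s.2 != 1)) nodes.
Proof. vm_compute. reflexivity. Qed.

Arguments I6 : simpl never.
Arguments azfs : simpl never.
Arguments valid : simpl never.
Arguments Vd : simpl never.
Arguments nodes : simpl never.
Arguments astep : simpl never.
Arguments cnt : simpl never.
Arguments dif : simpl never.
Arguments allb : simpl never.
Lemma ex_ord (n : nat) (P : pred 'I_n) (p : pred nat) :
  (forall i : 'I_n, P i = p i) -> [exists i, P i] = has p (iota 0 n).
Proof.
move=> H; apply/existsP/hasP => [[i Hi]|[x Hx px]].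
  by exists (nat_of_ord i); [rewrite mem_iota /= | rewrite -H].
rewrite mem_iota /= in Hx; exists (Ordinal Hx); by rewrite H.
Qed.
Lemma ex6 (P : pred 'I_6) (p : pred nat) :
  (forall i : 'I_6, P i = p i) -> [exists i, P i] = has p I6.
Proof. exact: ex_ord. Qed.
Lemma all6 (P : pred 'I_6) (p : pred nat) :
  (forall i : 'I_6, P i = p i) -> [forall i, P i] = all p I6.
Proof. move=> H; apply/forallP/allP => [Hf x Hx|Ha i].
  rewrite mem_iota /= in Hx; by rewrite -(H (Ordinal Hx)).
by rewrite H; apply: Ha; rewrite mem_iota /=.
Qed.
Lemma eq_rl (A B : eqType) (a : B) (b : A) : (inr a == inl b :> (A + B)%type) = false.
Proof. by []. Qed.
Lemma eq_lr (A B : eqType) (a : A) (b : B) : (inl a == inr b :> (A + B)%type) = false.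
Proof. by []. Qed.
Lemma eq_ll (A B : eqType) (a a' : A) : (inl a == inl a' :> (A + B)%type) = (a == a').
Proof. by []. Qed.
Lemma eq_rr (A B : eqType) (a a' : B) : (inr a == inr a' :> (A + B)%type) = (a == a').
Proof. by []. Qed.
Lemma all_ord (n : nat) (P : pred 'I_n) (p : pred nat) :
  (forall i : 'I_n, P i = p i) -> [forall i, P i] = all p (iota 0 n).
Proof.
move=> H; apply/forallP/allP => [Hf x Hx|Ha i].
  rewrite mem_iota /= in Hx; by rewrite -(H (Ordinal Hx)).
by rewrite H; apply: Ha; rewrite mem_iota /=.
Qed.
Lemma ex_sum (A B : finType) (P : pred (A + B)) :
  [exists x, P x] = [exists a, P (inl a)] || [exists b, P (inr b)].
Proof.
apply/existsP/orP => [[[a|b] H]|[/existsP[a H]|/existsP[b H]]].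
- by left; apply/existsP; exists a.
- by right; apply/existsP; exists b.
- by exists (inl a).
- by exists (inr b).
Qed.
Lemma all_sum (A B : finType) (P : pred (A + B)) :
  [forall x, P x] = [forall a, P (inl a)] && [forall b, P (inr b)].
Proof.
apply/forallP/andP => [H|[/forallP Ha /forallP Hb] [a|b] //].
by split; apply/forallP => x; apply: H.
Qed.

Lemma other (r : nat) (j : 'I_r) : 1 < r -> exists k : 'I_r, k != j.
Proof.
move=> hr; have h0 : 0 < r by apply: ltnW.
case: (eqVneq (nat_of_ord j) 0) => hj.
  by exists (Ordinal hr); apply/eqP => /(congr1 (@nat_of_ord _)); rewrite hj.
by exists (Ordinal h0); apply/eqP => /(congr1 (@nat_of_ord _)) /= h; rewrite -h in hj.
Qed.
Lemma ex_other (r : nat) (j : 'I_r) (b c : bool) : 1 < r ->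
  [exists k : 'I_r, (~~ b || (k != j)) && c] = c.
Proof.
move=> hr; apply/existsP/idP => [[k /andP[_ ->]] //|Hc].
by have [k hk] := other j hr; exists k; rewrite hk orbT.
Qed.
Definition E (r : nat) (j : 'I_r) (s : AS) : {set ('I_6 + 'I_r)} :=
  [set x : ('I_6 + 'I_r)%type | match x with inl i => mb s.1 i | inr k => ~~ s.2 || (k != j) end].

Lemma mb_fb b l (w : 'I_6) : mb (fb b l) w = mb l w || has (fun i => okf b l i w) I6 || uf l w.
Proof.
rewrite /mb /fb (nth_map 0); last by rewrite size_iota.
by rewrite nth_iota.
Qed.

Lemma step_E (r : nat) (j : 'I_r) (s : AS) : 1 < r ->
  force_step (@Hadj r) (E j s) = E j (astep s).
Proof.
case: s => l b hr.
apply/setP => [[w|k]]; rewrite [in RHS]inE /astep /fst /snd.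
- rewrite mb_fb /force_step !inE ex_sum orbA (@ex6 _ (fun i => okf b l i w)); last first.
    move=> i; rewrite inE all_sum (@all6 _ (fun x => (cadjn i x && ~~ mb l x) ==> (x == w))); last first.
      by move=> x; rewrite inE.
    have -> : [forall k, Hadj (inl i) (inr k) && (inr k \notin E j (l, b)) ==> (inr k == inl w)] = ~~ b || (i < 3).
      apply/forallP/idP => [H|H k].
        move/(_ j): H; rewrite inE eqxx orbF eq_rl implybF. 
        by case: b => //=; rewrite andbT -leqNgt.
      rewrite inE eq_rl implybF /=; move: H; case: b => /= H; last by rewrite andbF.
      by rewrite ltnNge in H; rewrite (negbTE H).
    by rewrite /okf.
  rewrite (@eq_existsb _ _ (fun k : 'I_r => (~~ b || (k != j)) && uf l w)); last first.
    move=> k; rewrite inE all_sum (@all6 _ (fun x => ((3 <= x) && ~~ mb l x) ==> (x == w))); last first.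
      by move=> x; rewrite inE.
    have -> : [forall x : 'I_r, Hadj (inr k) (inr x) && (inr x \notin E j (l, b)) ==> (inr x == inl w)] = true.
      by apply/forallP.
    by rewrite andbT.
  by rewrite ex_other.
- rewrite /force_step !inE ex_sum.
  case: (boolP (~~ b || (k != j))) => H.
    by move: H; case: b => //= ->; rewrite orbT.
  move: H; case: b => //= /negPn/eqP ->.
  have -> : [exists b0 : 'I_r, [&& inr b0 \in E j (l, true), Hadj (inr b0) (inr j), ~~ ~~ (j != j)
            & [forall x, Hadj (inr b0) x && (x \notin E j (l, true)) ==> (x == inr j)]]] = false.
    by apply/existsP => -[x /and4P[]].
  rewrite eqxx /= orbF negbK (@ex6 _ (fun i => [&& mb l i, 3 <= i & all (fun x => ~~ (cadjn i x && ~~ mb l x)) I6])); first by rewrite orbF.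
  move=> i; rewrite inE all_sum (@all6 _ (fun x => ~~ (cadjn i x && ~~ mb l x))); last first.
    by move=> x; rewrite in_set eq_lr implybF.
  apply/idP/idP => [/and4P[-> -> -> _] // | /and3P[-> -> ->]] /=.
  by apply/forallP => x; rewrite in_set /= eq_rr negbK implybb.
Qed.

Lemma size_fb b l : size (fb b l) = 6.
Proof. by rewrite size_map size_iota. Qed.
Lemma size_iter n s : size s.1 = 6 -> size (iter n astep s).1 = 6.
Proof. by case: n => [//|n] _; rewrite iterS; exact: size_fb. Qed.
Lemma allb_size n l : size l = n -> l \in allb n.
Proof.
elim: n l => [|n IH] [|b l] //= [h].
have inj (b0 : bool) : injective (cons b0) by move=> x y [].
by case: b; rewrite /= !mem_cat !(mem_map (inj _)) IH ?orbT.
Qed.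
Lemma in_nodes s : size s.1 = 6 -> s \in nodes.
Proof.
case: s => l b /= h; apply: (allpairs_f (fun l b => (l, b))); first exact: allb_size.
by case: b.
Qed.
Lemma nodes6 s : s \in nodes -> size s.1 = 6.
Proof. by move=> h; apply/eqP; apply: (allP nodes_size). Qed.
Lemma C1' s : size s.1 = 6 -> astep (iter 7 astep s) = iter 7 astep s.
Proof. by move=> h; apply/eqP; exact: (allP C1 _ (in_nodes h)). Qed.
Lemma C2' s : size s.1 = 6 -> afull s -> afull (astep s).
Proof. by move=> h; apply/implyP; exact: (allP C2 _ (in_nodes h)). Qed.
Lemma iter_ge7 s n : size s.1 = 6 -> 7 <= n -> iter n astep s = iter 7 astep s.
Proof.
move=> h; elim: n => // n IH; rewrite leq_eqVlt => /orP[/eqP <- //|].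
rewrite ltnS => /IH H.
have -> : iter n.+1 astep s = astep (iter n astep s) by [].
by rewrite H; exact: C1'.
Qed.
Lemma full_mono s m n : size s.1 = 6 -> m <= n -> afull (iter m astep s) -> afull (iter n astep s).
Proof.
move=> h; elim: n => [|n IH]; first by rewrite leqn0 => /eqP ->.
rewrite leq_eqVlt => /orP[/eqP -> //|]; rewrite ltnS => /IH H /H.
have -> : iter n.+1 astep s = astep (iter n astep s) by [].
by apply: C2'; exact: size_iter.
Qed.
Lemma azfsP s n : size s.1 = 6 -> afull (iter n astep s) -> azfs s.
Proof.
move=> h; case: (leqP 7 n) => hn.
  by rewrite iter_ge7.
by apply: full_mono => //; exact: ltnW.
Qed.

Lemma iter_E r (j : 'I_r) s n : 1 < r ->
  iter n (force_step (@Hadj r)) (E j s) = E j (iter n astep s).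
Proof. by move=> hr; elim: n => //= n IH; rewrite IH step_E. Qed.

Lemma E_full r (j : 'I_r) s : (E j s == setT) = afull s.
Proof.
case: s => l b; apply/idP/idP => [/eqP H|/andP[/allP H hb]].
  have Hx x : x \in E j (l, b) by rewrite H inE.
  apply/andP; split.
    apply/allP => i; rewrite mem_iota => /andP[_ hi].
    by have := Hx (inl (Ordinal hi)); rewrite in_set.
  by have := Hx (inr j); rewrite in_set eqxx orbF.
apply/eqP/setP => [[i|k]]; rewrite !in_set /=; last by rewrite hb.
by apply: H; rewrite mem_iota /=.
Qed.

Lemma cardTs r : #|{: 'I_6 + 'I_r}| = r + 6.
Proof. by rewrite card_sum !card_ord addnC. Qed.

Lemma zL1 r (j : 'I_r) s n : 1 < r -> size s.1 = 6 ->
  iter n (force_step (@Hadj r)) (E j s) == setT -> azfs s.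
Proof. by move=> hr h; rewrite iter_E // E_full; exact: azfsP. Qed.
Lemma zL2 r (j : 'I_r) s : 1 < r -> azfs s -> iter 7 (force_step (@Hadj r)) (E j s) == setT.
Proof. by move=> hr; rewrite /azfs -(E_full j) -(iter_E j s 7 hr). Qed.
Lemma zL3 r : 1 < r -> 7 < #|{: 'I_6 + 'I_r}|.+1.
Proof. move=> hr; rewrite card_sum !card_ord; lia. Qed.
Lemma zfs_E r (j : 'I_r) s : 1 < r -> size s.1 = 6 -> zfs (@Hadj r) (E j s) = azfs s.
Proof.
move=> hr h; apply/existsP/idP => [[n]|H].
  exact: zL1.
exists (Ordinal (zL3 hr)); exact: zL2.
Qed.

Definition code r (S : {set 'I_6 + 'I_r}) : seq bool := [seq inl i \in S | i : 'I_6 <- enum 'I_6].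
Lemma size_code r (S : {set 'I_6 + 'I_r}) : size (code S) = 6.
Proof. by rewrite size_map size_enum_ord. Qed.
Lemma mb_code r (S : {set 'I_6 + 'I_r}) (i : 'I_6) : mb (code S) i = (inl i \in S).
Proof. by rewrite /mb (nth_map i) ?size_enum_ord // nth_ord_enum. Qed.

Lemma W2_step r (W : {set 'I_r}) (B : {set 'I_6 + 'I_r}) : 1 < #|W| ->
  (forall k, (inr k \in B) = (k \notin W)) ->
  forall k, (inr k \in force_step (@Hadj r) B) = (k \notin W).
Proof.
move=> hW hB k; rewrite /force_step in_setU hB.
case: (boolP (k \in W)) => hk //=.
rewrite in_set; apply/existsP => -[[i|k'] /and4P[hv ha hn /forallP hf]] //.
move: hW; rewrite (cardsD1 k) hk add1n ltnS => /card_gt0P [k2].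
rewrite in_setD1 => /andP[hne hk2].
have := hf (inr k2); rewrite /= hB hk2 eq_rr (negbTE hne) /=.
by move: ha; rewrite /= => ->.
Qed.

Lemma W2_iter r (W : {set 'I_r}) (B : {set 'I_6 + 'I_r}) : 1 < #|W| ->
  (forall k, (inr k \in B) = (k \notin W)) ->
  forall n k, (inr k \in iter n (force_step (@Hadj r)) B) = (k \notin W).
Proof.
move=> hW hB; elim => [|n IH] //=; exact: W2_step.
Qed.

Lemma decomp r (S : {set 'I_6 + 'I_r}) : 0 < r -> zfs (@Hadj r) S ->
  exists j s, S = E j s /\ size s.1 = 6.
Proof.
move=> hr zS; set W := [set k | inr k \notin S].
have hB : forall k, (inr k \in S) = (k \notin W) by move=> k; rewrite in_set negbK.
case: (ltnP 1 #|W|) => hW.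
  exfalso; move: zS => /existsP[n /eqP Hn].
  have : 0 < #|W| by apply: ltnW.
  case/card_gt0P => k hk.
  have := W2_iter hW hB n k; rewrite Hn inE hk //.
move: hW; rewrite leq_eqVlt ltnS leqn0 => /orP[/cards1P[j hj]|/eqP/cards0_eq hj].
  exists j, (code S, true); split; last exact: size_code.
  apply/setP => [[i|k]]; rewrite in_set /= ?mb_code //.
  by rewrite hB hj in_set1.
exists (Ordinal hr), (code S, false); split; last exact: size_code.
apply/setP => [[i|k]]; rewrite in_set /= ?mb_code //.
by rewrite hB hj in_set0.
Qed.

Lemma card_split (A B : finType) (S : {set A + B}) :
  #|S| = #|[set a | inl a \in S]| + #|[set b | inr b \in S]|.
Proof. by rewrite -!sum1dep_card -sum1_card big_sumType. Qed.

Lemma card6 (p : pred nat) : #|[set i : 'I_6 | p i]| = count p I6.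
Proof. by rewrite -sum1dep_card -(big_mkord (fun i => p i) (fun _ => 1)) sum1_count. Qed.

Lemma card_E r (j : 'I_r) l b : #|E j (l, b)| = cnt l + (r - b).
Proof.
rewrite card_split.
have -> : [set a | inl a \in E j (l, b)] = [set i : 'I_6 | mb l i] by apply/setP => i; rewrite !in_set.
rewrite card6; congr (_ + _); case: b.
  have -> : [set k | inr k \in E j (l, true)] = [set~ j].
    by apply/setP => k; rewrite !inE.
  by rewrite cardsC1 card_ord subn1.
have -> : [set k | inr k \in E j (l, false)] = setT by apply/setP => k; rewrite !in_set.
by rewrite cardsT card_ord subn0.
Qed.

Lemma card_sdE r (j j' : 'I_r) s s' :
  #|(E j s :\: E j' s') :|: (E j' s' :\: E j s)| =
  dif s.1 s'.1 + #|[set k : 'I_r | (~~ s.2 || (k != j)) != (~~ s'.2 || (k != j'))]|.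
Proof.
rewrite card_split /dif -card6; congr (_ + _); apply: eq_card => x; rewrite !in_set.
  by case: (mb s.1 x); case: (mb s'.1 x).
by case: (~~ s.2 || _); case: (~~ s'.2 || _).
Qed.

Lemma E_false r (j j' : 'I_r) l : E j (l, false) = E j' (l, false).
Proof. by apply/setP => [[i|k]]; rewrite !in_set. Qed.

Lemma lift_adj r (j : 'I_r) d s s' : 1 < r -> size s.1 = 6 -> size s'.1 = 6 ->
  valid d s -> valid d s' -> aadj s s' -> tar_adj (@Hadj r) (r + d) (E j s) (E j s').
Proof.
case: s => l b; case: s' => l' b' hr h h'; rewrite /valid => /andP[z c] /andP[z' c'] a.
rewrite /tar_adj !zfs_E // z z' !card_E card_sdE /=.
apply/and3P; split.
- by move: c => /=; case: (b); lia.
- by move: c' => /=; case: (b'); lia.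
clear h h' z z' c c'; move: a; rewrite /aadj /= => /orP[] /andP[/eqP e1 e2].
  subst b'; have -> : [set k | (~~ b || (k != j)) != (~~ b || (k != j))] = set0.
    by apply/setP => k; rewrite !in_set eqxx.
  by rewrite cards0 addn0 e2.
have -> : [set k | (~~ b || (k != j)) != (~~ b' || (k != j))] = [set j].
  apply/setP => k; rewrite !inE; move: e2; case: b; case: b' => //= _.
    by case: (k == j).
  by case: (k == j).
by rewrite cards1 e1.
Qed.

Lemma reach_conn r (j : 'I_r) d n : 1 < r -> valid d hub -> forall y,
  y \in iter n (stepR (Vd d)) [:: hub] ->
  y \in Vd d /\ connect (tar_adj (@Hadj r) (r + d)) (E j hub) (E j y).
Proof.
move=> hr hv; elim: n => [|n IH] y.
  rewrite /= inE => /eqP ->; split; last exact: connect0.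
  by rewrite mem_filter hv in_nodes.
have -> : iter n.+1 (stepR (Vd d)) [:: hub] = stepR (Vd d) (iter n (stepR (Vd d)) [:: hub]) by [].
rewrite /stepR mem_cat => /orP[/IH //|].
rewrite mem_filter => /andP[/hasP[x xR axy] yV].
have [xV cx] := IH x xR; split; first exact: yV.
apply: connect_trans cx _; apply: connect1.
move: xV yV; rewrite !mem_filter => /andP[vx nx] /andP[vy ny].
by apply: lift_adj => //; apply: nodes6.
Qed.

Lemma tar_sym r k : symmetric (tar_adj (@Hadj r) k).
Proof.
move=> S1 S2; rewrite /tar_adj setUC.
by case: (zfs _ S1); case: (zfs _ S2); case: (#|S1| <= k); case: (#|S2| <= k).
Qed.

Lemma conn_key r d (j0 : 'I_r) (S : {set 'I_6 + 'I_r}) : 1 < r -> valid d hub ->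
  all (fun s => s \in iter 12 (stepR (Vd d)) [:: hub]) (Vd d) ->
  zfs (@Hadj r) S -> #|S| <= r + d ->
  connect (tar_adj (@Hadj r) (r + d)) (E j0 hub) S.
Proof.
move=> hr hv hall zS cS; have [j [s [eS hs]]] := decomp (ltnW hr) zS.
subst S.
have vs : valid d s.
  rewrite /valid -(zfs_E j hr hs) zS /=; move: cS; case: s hs {zS} => l b hs.
  by rewrite card_E /=; case: (b); lia.
have sV : s \in Vd d by rewrite mem_filter vs in_nodes.
have [_ H] := reach_conn j hr hv (allP hall s sV).
rewrite (E_false j0 j); exact: H.
Qed.

Lemma valid_E r d (j : 'I_r) s : 1 < r -> size s.1 = 6 -> valid d s ->
  zfs (@Hadj r) (E j s) && (#|E j s| <= r + d).
Proof.
case: s => l b hr h; rewrite /valid => /andP[z c].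
rewrite (zfs_E j hr h) z card_E /=; move: c => /= c.
case: (b) c => /= c; lia.
Qed.

Lemma conn r d : 1 < r -> check d -> tar_connected (@Hadj r) (r + d).
Proof.
move=> hr; rewrite /check /check_gen2 /check_gen => /andP[hubV hall].
pose j0 : 'I_r := Ordinal (ltnW hr).
have hv : valid d hub by move: hubV; rewrite mem_filter => /andP[].
split; first by exists (E j0 hub); exact: valid_E.
move=> S1 S2 z1 z2 c1 c2; apply: (@connect_trans _ _ (E j0 hub)); last exact: conn_key.
rewrite (sym_connect_sym (@tar_sym r (r + d))); exact: conn_key.
Qed.

Lemma connect_inv (T : finType) (e : rel T) (P : pred T) :
  (forall x y, e x y -> P x -> P y) -> forall x y, connect e x y -> P x -> P y.
Proof.
move=> H x y /connectP[p]; elim: p x => [x _ -> //|z p IH x /= /andP[exz pz] ey] Px.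
by apply: (IH z pz ey); apply: H exz Px.
Qed.

Lemma lb_zfs r (S : {set 'I_6 + 'I_r}) : 1 < r -> zfs (@Hadj r) S ->
  r + 2 <= #|S| /\ ((forall k, inr k \in S) -> r + 3 <= #|S|).
Proof.
move=> hr zS; have [j [[l b] [eS hs]]] := decomp (ltnW hr) zS; subst S.
have c3 := allP C3 _ (in_nodes hs).
rewrite (zfs_E j hr hs) in zS; rewrite zS /= in c3.
rewrite card_E; split; first by case: (b) => /=; lia.
move=> H; have := H j; rewrite in_set /= eqxx /= orbF => nb.
by move: nb; case: (b) => //= _; lia.
Qed.

Lemma cnt3 : cnt s3.1 = 3. Proof. by []. Qed.
Lemma cnth : cnt hub.1 = 3. Proof. by []. Qed.
Lemma cnt4 : cnt l4 = 4. Proof. by []. Qed.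

Lemma bigmin_le (I : eqType) (s : seq I) (P : pred I) (F : I -> nat) x0 j :
  j \in s -> P j -> \big[minn/x0]_(i <- s | P i) F i <= F j.
Proof.
elim: s => [//|a s IH]; rewrite inE big_cons => /orP[/eqP <-|js] Pj.
  by rewrite Pj geq_minl.
case: (P a); last exact: IH.
exact: leq_trans (geq_minr _ _) (IH js Pj).
Qed.

Lemma Zf_val r : 1 < r -> Zf (@Hadj r) = r + 2.
Proof.
move=> hr; pose j0 : 'I_r := Ordinal (ltnW hr).
have z3 : zfs (@Hadj r) (E j0 s3).
  by rewrite (@zfs_E r j0 s3 hr (erefl _)); case/and3P: C4.
have c3 : #|E j0 s3| = r + 2 by rewrite card_E cnt3 /=; lia.
rewrite /Zf; apply/eqP; rewrite eqn_leq; apply/andP; split.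
  rewrite -c3; exact: (bigmin_le _ _ (mem_index_enum (E j0 s3)) z3).
apply: (big_ind (fun x => r + 2 <= x)).
- by rewrite cardTs; lia.
- by move=> x y hx hy; rewrite leq_min hx hy.
- by move=> S zS; case: (lb_zfs hr zS).
Qed.

Lemma disc2 r : 1 < r -> ~ tar_connected (@Hadj r) (r + 2).
Proof.
move=> hr [_ H].
pose j1 : 'I_r := Ordinal (ltnW hr); have [j2 hj] := other j1 hr.
have z3 : forall j : 'I_r, zfs (@Hadj r) (E j s3).
  by move=> j; rewrite (@zfs_E r j s3 hr (erefl _)); case/and3P: C4.
have c3 : forall j : 'I_r, #|E j s3| <= r + 2.
  by move=> j; rewrite card_E cnt3 /=; lia.
have closed : forall S S', tar_adj (@Hadj r) (r + 2) S S' -> inr j1 \notin S -> inr j1 \notin S'.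
  move=> S S' /and5P[zS zS' cS cS' cd] nS; apply/negP => inS'.
  have inD : inr j1 \in (S :\: S') :|: (S' :\: S) by rewrite !inE nS inS'.
  case/cards1P: cd => x Dx.
  have allS' : forall k, inr k \in S'.
    move=> k; case: (eqVneq k j1) => [->|hk]; first exact: inS'.
    have nD : inr k \notin (S :\: S') :|: (S' :\: S).
      rewrite Dx in_set1; apply/eqP => e.
      by move: inD; rewrite Dx in_set1 -e => /eqP [] e'; rewrite e' eqxx in hk.
    have inS : inr k \in S.
      have [j [[l b] [eS hs]]] := decomp (ltnW hr) zS.
      move: nS; rewrite eS !in_set /= negb_or !negbK => /andP[_ /eqP <-].
      by rewrite hk orbT.
    by move: nD; rewrite !inE inS; case: (inr k \in S').
  have h := (lb_zfs hr zS').2 allS'.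
  by have := leq_trans h cS'; rewrite leq_add2l.
have h1 : inr j1 \notin E j1 s3 by rewrite in_set /= ?eqxx.
have h2 : inr j1 \in E j2 s3 by rewrite in_set /= eq_sym hj.
have := connect_inv closed (H _ _ (z3 j1) (z3 j2) (c3 j1) (c3 j2)).
by move/(_ h1); rewrite h2.
Qed.

Lemma card_inr0 r (j j' : 'I_r) (s s' : AS) : s.2 = false ->
  #|[set k : 'I_r | (~~ s.2 || (k != j)) != (~~ s'.2 || (k != j'))]| = s'.2.
Proof.
move=> ->; case: s' => l' [].
  have -> : [set k : 'I_r | (~~ false || (k != j)) != (~~ (l', true).2 || (k != j'))] = [set j'].
    by apply/setP => k; rewrite !inE /=; case: (k == j').
  by rewrite cards1.
have -> : [set k : 'I_r | (~~ false || (k != j)) != (~~ (l', false).2 || (k != j'))] = set0.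
  by apply/setP => k; rewrite !inE.
by rewrite cards0.
Qed.

Lemma disc4 r : 1 < r -> ~ tar_connected (@Hadj r) (r + 4).
Proof.
move=> hr [_ H]; pose j0 : 'I_r := Ordinal (ltnW hr).
have z4 : zfs (@Hadj r) (E j0 (l4, false)).
  by rewrite (@zfs_E r j0 (l4, false) hr (erefl _)); case/and3P: C4.
have zh : zfs (@Hadj r) (E j0 hub).
  by rewrite (@zfs_E r j0 hub hr (erefl _)); case/and3P: C4.
have c4 : #|E j0 (l4, false)| <= r + 4 by rewrite card_E cnt4 /=; lia.
have ch : #|E j0 hub| <= r + 4 by rewrite card_E cnth /=; lia.
have iso : forall S', ~~ tar_adj (@Hadj r) (r + 4) (E j0 (l4, false)) S'.
  move=> S'; apply/negP => /and5P[_ zS' _ cS' cd].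
  have [j' [[l' b'] [eS hs']]] := decomp (ltnW hr) zS'; subst S'.
  move: cd; rewrite card_sdE card_inr0 // /= => cd.
  have c6 := allP C6 _ (in_nodes hs').
  rewrite -(zfs_E j' hr hs') zS' /= in c6.
  have hc : cnt l' + ~~ b' <= 5 by move: cS'; rewrite card_E; case: (b') => /=; lia.
  rewrite hc /= in c6.
  by rewrite cd in c6.
have closed : forall S S', tar_adj (@Hadj r) (r + 4) S S' ->
    S == E j0 (l4, false) -> S' == E j0 (l4, false).
  by move=> S S' a /eqP eS; subst S; move: (iso S'); rewrite a.
have := connect_inv closed (H _ _ z4 zh c4 ch) (eqxx _).
move/eqP/setP/(_ (inl (@Ordinal 6 1 isT))); rewrite !in_set /= => e.
discriminate e.
Qed.

Theorem proposition3p9 (r : nat) : 2 <= r ->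
  Zf (@Hadj r) = r + 2 /\ lz0 (@Hadj r) (r + 3) /\ is_z0 (@Hadj r) (r + 5).
Proof.
move=> hr; case/and3P: C5 => k3 k5 k6.
split; first exact: Zf_val.
split.
  split; first exact: conn.
  move=> j hj; case: (ltnP j (r + 2)) => h2.
    move=> [[S /andP[zS cS]] _]; have h := (lb_zfs hr zS).1.
    by have := leq_trans h cS; rewrite leqNgt h2.
  have -> : j = r + 2 by lia.
  exact: disc2.
split.
  move=> i /andP[h1 h2]; rewrite cardTs in h2.
  have : i = r + 5 \/ i = r + 6 by lia.
  by case => ->; apply: conn.
move=> j hj Hg; apply: (disc4 hr); apply: Hg.
rewrite cardTs; apply/andP; split; lia.
Qed.
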